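(* Let $0<p\le2$ and let $G$ be the additive group of finitely supported real sequences $r=(r_i)_{i\in\mathbb{N}}$. The function $r\mapsto\|r\|_p^p=\sum_i|r_i|^p$ from $G$ to $\mathbb{R}_+$ is a morphism on an arbitrary large subset of $G$: for every $N,M\in\mathbb{N}$ and every $s_1,\dots,s_M\in\mathbb{R}_+$ there exist $g_{n,k}\in G$ ($1\le n\le N$, $1\le k\le M$) such that $\|g_{m,k}-g_{n,j}\|_p^p=s_j+s_k$ for all $j,k$ and all $n\ne m$.
   Context: $\mathbb{R}_+=[0,\infty)$. The paper denotes this group by $\mathbb{R}^{\mathbb{N}}$ (countably many copies of $\mathbb{R}$, elements having finitely many nonzero coordinates), with group operation coordinatewise addition. *)

(* Defs.v *)
From Stdlib Require Import Reals Lra Lia.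
From Coquelicot Require Import Coquelicot.
Open Scope R_scope.

Definition finsupp (r : nat -> R) : Prop :=
  exists L : nat, forall i : nat, (L <= i)%nat -> r i = 0.

(* |x|^p with the convention 0^p = 0 (p > 0). *)
Definition abspow (x p : R) : R :=
  if Req_EM_T x 0 then 0 else Rpower (Rabs x) p.

Definition lp_pow (p : R) (r : nat -> R) : R :=
  Series (fun i => abspow (r i) p).

(* Main.v *)
Require Import Defs.
From Stdlib Require Import Reals Lra Lia.
From Coquelicot Require Import Coquelicot.
Open Scope R_scope.

Lemma sum_n_single (a : nat) (x : R) (n : nat) :
  sum_n (fun i => if Nat.eqb i a then x else 0) n = if Nat.leb a n then x else 0.
Proof.
  induction n as [|n IH].
  - rewrite sum_O. destruct a; simpl; reflexivity.
  - rewrite sum_Sn, IH. change plus with Rplus.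
    destruct (Nat.eqb (S n) a) eqn:E.
    + apply Nat.eqb_eq in E. subst.
      replace (Nat.leb (S n) n) with false by (symmetry; apply Nat.leb_gt; lia).
      replace (Nat.leb (S n) (S n)) with true by (symmetry; apply Nat.leb_le; lia). lra.
    + apply Nat.eqb_neq in E. destruct (Nat.leb a n) eqn:E2.
      * apply Nat.leb_le in E2. replace (Nat.leb a (S n)) with true
          by (symmetry; apply Nat.leb_le; lia). lra.
      * apply Nat.leb_gt in E2.
        replace (Nat.leb a (S n)) with false by (symmetry; apply Nat.leb_gt; lia). lra.
Qed.

Lemma is_series_single (a : nat) (x : R) :
  is_series (fun i => if Nat.eqb i a then x else 0) x.
Proof.
  assert (H : is_lim_seq (sum_n (fun i => if Nat.eqb i a then x else 0)) x).
  2:{ exact H. }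
  apply (is_lim_seq_ext_loc (fun _ => x)).
  - exists a. intros n Hn. rewrite sum_n_single.
    replace (Nat.leb a n) with true. reflexivity. symmetry; apply Nat.leb_le; lia.
  - apply is_lim_seq_const.
Qed.

Lemma abspow_opp x p : abspow (- x) p = abspow x p.
Proof.
  unfold abspow. destruct (Req_EM_T (-x) 0); destruct (Req_EM_T x 0); try lra.
  rewrite Rabs_Ropp. reflexivity.
Qed.

Definition rt (p s : R) : R := if Rlt_dec 0 s then Rpower s (/ p) else 0.

Lemma abspow_rt p s : 0 < p -> 0 <= s -> abspow (rt p s) p = s.
Proof.
  intros Hp Hs. unfold rt, abspow. destruct (Rlt_dec 0 s).
  - destruct (Req_EM_T (Rpower s (/p)) 0) as [e|e].
    + exfalso. unfold Rpower in e. pose proof (exp_pos (/p * ln s)). lra.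
    + rewrite Rabs_right. 2:{ left. unfold Rpower. apply exp_pos. }
      rewrite Rpower_mult. replace (/p * p) with 1 by (field; lra).
      apply Rpower_1; lra.
  - destruct (Req_EM_T 0 0); lra.
Qed.

Theorem proposition4p11 :
  forall p : R, 0 < p <= 2 ->
  forall (N M : nat) (s : nat -> R),
    (forall k : nat, (1 <= k <= M)%nat -> 0 <= s k) ->
    exists g : nat -> nat -> (nat -> R),
      (forall n k : nat, (1 <= n <= N)%nat -> (1 <= k <= M)%nat ->
         finsupp (g n k)) /\
      (forall n m j k : nat,
         (1 <= n <= N)%nat -> (1 <= m <= N)%nat ->
         (1 <= j <= M)%nat -> (1 <= k <= M)%nat -> n <> m ->
         lp_pow p (fun i => g m k i - g n j i) = s j + s k).
Proof.
  intros p Hp N M s Hs.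
  exists (fun n k i => if Nat.eqb i (n * S M + k) then rt p (s k) else 0).
  split.
  - intros n k _ _. exists (S (n * S M + k)). intros i Hi.
    replace (Nat.eqb i (n * S M + k)) with false. reflexivity.
    symmetry; apply Nat.eqb_neq; lia.
  - intros n m j k Hn Hm Hj Hk Hnm.
    assert (Hne : (m * S M + k <> n * S M + j)%nat).
    { intro E. destruct (Nat.lt_total m n) as [L|[L|L]]; [ | subst; contradiction | ].
      - assert (m * S M + S M <= n * S M)%nat.
        { replace (m * S M + S M)%nat with (S m * S M)%nat by lia.
          apply Nat.mul_le_mono_r; lia. } lia.
      - assert (n * S M + S M <= m * S M)%nat.
        { replace (n * S M + S M)%nat with (S n * S M)%nat by lia.
          apply Nat.mul_le_mono_r; lia. } lia. }
    unfold lp_pow.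
    rewrite (Series_ext _ (fun i => (if Nat.eqb i (n * S M + j) then s j else 0)
                                 + (if Nat.eqb i (m * S M + k) then s k else 0))).
    + apply is_series_unique. apply (is_series_plus _ _ (s j) (s k));
        apply is_series_single.
    + intro i. destruct (Nat.eqb i (m * S M + k)) eqn:E1;
      destruct (Nat.eqb i (n * S M + j)) eqn:E2.
      * apply Nat.eqb_eq in E1; apply Nat.eqb_eq in E2; lia.
      * rewrite Rminus_0_r, abspow_rt; [lra|lra|apply Hs; lia].
      * rewrite Rminus_0_l, abspow_opp, abspow_rt; [lra|lra|apply Hs; lia].
      * rewrite Rminus_0_r. unfold abspow. destruct (Req_EM_T 0 0); lra.
Qed.
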